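(* For all integers $k,\ell\ge 0$, every blowup $G$ of $F_{k,\ell}$ satisfies $\chi(G)\le\lceil\frac54\omega(G)\rceil$.
   Context: For integers $k,\ell\ge 0$, $F_{k,\ell}$ is the graph whose vertex set is partitioned into $A,B,U,W,\{x,y,z\}$ where: $A=\{a_0,\dots,a_k\}$ is a clique, $U=\{u_1,\dots,u_k\}$ is a stable set, and the only edges between $A$ and $U$ are $a_iu_i$ ($1\le i\le k$); $B=\{b_0,\dots,b_\ell\}$ is a clique, $W=\{w_1,\dots,w_\ell\}$ is a stable set, and the only edges between $B$ and $W$ are $b_jw_j$ ($1\le j\le\ell$); $N(x)=A\cup U\cup W\cup\{y\}$, $N(y)=B\cup U\cup W\cup\{x\}$, $N(z)=A\cup B$. A blowup of $H$ is any graph whose vertex set can be partitioned into $|V(H)|$ (not necessarily non-empty) cliques $Q_v$, with $Q_u$ complete to $Q_v$ if $uv\in E(H)$ and no edges between them otherwise. *)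

(* Defs.v *)
From mathcomp Require Import all_boot.
Set Implicit Arguments. Unset Strict Implicit. Unset Printing Implicit Defensive.

(* A (finite simple) graph is a symmetric irreflexive relation adj on a finType V. *)

(* Vertex set of F_{k,l}:
   inl (inl (inl i))  = a_i   (i : 'I_(k+1), i.e. a_0..a_k)
   inl (inl (inr j))  = u_(j+1) (j : 'I_k, i.e. u_1..u_k)
   inl (inr (inl i))  = b_i   (i : 'I_(l+1))
   inl (inr (inr j))  = w_(j+1) (j : 'I_l)
   inr 0 = x, inr 1 = y, inr 2 = z                                       *)
Definition FV (k l : nat) : finType :=
  (('I_k.+1 + 'I_k) + ('I_l.+1 + 'I_l) + 'I_3)%type.

Definition Fedge0 (k l : nat) (v w : FV k l) : bool :=
  match v, w with
  | inl (inl (inl _)), inl (inl (inl _)) => true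
  | inl (inl (inl i)), inl (inl (inr j)) => nat_of_ord i == j.+1
  | inl (inr (inl _)), inl (inr (inl _)) => true
  | inl (inr (inl i)), inl (inr (inr j)) => nat_of_ord i == j.+1
  | inr t, inl (inl (inl _)) => (nat_of_ord t == 0) || (nat_of_ord t == 2)
  | inr t, inl (inl (inr _)) => (nat_of_ord t == 0) || (nat_of_ord t == 1)
  | inr t, inl (inr (inl _)) => (nat_of_ord t == 1) || (nat_of_ord t == 2)
  | inr t, inl (inr (inr _)) => (nat_of_ord t == 0) || (nat_of_ord t == 1)
  | inr t, inr s => (nat_of_ord t == 0) && (nat_of_ord s == 1)
  | _, _ => false
  end.

Definition Fadj (k l : nat) : rel (FV k l) :=
  fun v w => (v != w) && (Fedge0 v w || Fedge0 w v).

(* G (on V with adjacency adj) is a blowup of H (on VH with adjacency adjH):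
   there is a map p : V -> VH (Q_h = p^-1(h), possibly empty) such that each
   Q_h is a clique, Q_h is complete to Q_h' if h h' adjacent, anticomplete otherwise. *)
Definition is_blowup (V VH : finType) (adj : rel V) (adjH : rel VH) : Prop :=
  exists p : V -> VH, forall x y : V, x != y ->
    adj x y = (p x == p y) || adjH (p x) (p y).

Definition is_clique (V : finType) (adj : rel V) (A : {set V}) : bool :=
  [forall x in A, forall y in A, (x != y) ==> adj x y].

Definition omega (V : finType) (adj : rel V) : nat :=
  \max_(A : {set V} | is_clique adj A) #|A|.

Definition colorable (V : finType) (adj : rel V) (c : nat) : bool :=
  [exists f : {ffun V -> 'I_c}, forall x, forall y, adj x y ==> (f x != f y)].

(* chromatic number: least c such that G is c-colourable
   (for a loopless graph this is at most #|V|, so the range c <= #|V| suffices) *)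
Definition chi (V : finType) (adj : rel V) : nat :=
  \big[minn/#|V|]_(c < #|V|.+1 | colorable adj c) c.

(* Main.v *)
Require Import Defs.
From mathcomp Require Import all_boot zify.
From Stdlib Require Import ZArith Lia Psatz.

Section ZA.
Local Open Scope Z_scope.
Lemma caseA (w c al X Y a mu d : Z) :
  0 <= al -> 0 <= X -> 0 <= Y -> 0 <= a -> 0 <= mu -> d = c - w ->
  w <= 4*d -> al + X <= w -> X+Y<=w ->
  a <= al -> a+mu+X <= w -> X+Y+mu <= w ->
  al * (X+Y+a+mu-c) <= a*Y.
Proof. intros. assert (0 <= d) by lia.
  assert (0 <= al*d) by (apply Z.mul_nonneg_nonneg; lia).
  assert (4*Y*(al-Y) <= al*al) by (pose proof (Z.square_nonneg (al-2*Y)); nia).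
  assert (al*al <= al * w) by nia.
  destruct (Z.le_gt_cases a Y).
- assert (0 <= al*(w-X-Y-mu)) by (apply Z.mul_nonneg_nonneg; lia).
  destruct (Z.le_gt_cases al Y).
  + assert (a*(al-Y) <= 0) by nia. nia.
  + assert (a*(al-Y) <= Y*(al - Y)) by (apply Z.mul_le_mono_nonneg_r; lia).
  nia.
- assert (0 <= al*(w-X-a-mu)) by (apply Z.mul_nonneg_nonneg; lia).
  assert (Y*(al-a) <= Y*(al - Y)) by nia.
  nia.
Qed.
Lemma rm_bound (w c al be Z Y r d m : Z) :
  0 <= al -> 0 <= Y -> 0 <= Z -> 0 <= m -> d = c - w -> 0 <= w ->
  w <= 4*d -> al+Z <= w -> be+Y <= w -> be+Z <= w ->
  (r = 0 \/ r = al+be+Z-c) -> 0 <= r -> m <= al -> m <= Y ->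
  r * m <= al * d.
Proof. intros. destruct (Z.le_gt_cases r d).
- nia.
- destruct H9; [lia|]. 
  assert (r <= al - d) by lia. assert (m <= w - d - r) by lia.
  assert (r*m <= r*(w-d-r)) by nia.
  assert (al*d >= (r+d)*d) by nia.
  pose proof (Z.square_nonneg (2*r - (w-2*d))).
  assert ((w-2*d)*(w-2*d) <= 4*d*d) by nia.
  nia.
Qed.
Lemma caseB (w c al be X Y Z a mu d r : Z) :
  0 <= al -> 0 <= X -> 0 <= Y -> 0<= Z -> 0 <= a -> 0 <= mu -> d = c - w -> 0 <= w ->
  w <= 4*d -> al + X <= w -> X+Y<=w -> al+Z <= w -> be+Y <= w -> be+Z <= w ->
  (r = 0 \/ r = al+be+Z-c) -> 0 <= r -> r <= al ->
  a <= al -> a+mu+X <= w -> X+Y+mu <= w ->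
  al * (X+Y+a+mu-c) <= a*(al - r).
Proof. intros. assert (0 <= d) by lia.
  destruct (Z.le_gt_cases a Y).
- assert (0 <= al*(w-X-Y-mu)) by (apply Z.mul_nonneg_nonneg; lia).
  pose proof (rm_bound w c al be Z Y r d a). nia.
- assert (0 <= al*(w-X-a-mu)) by (apply Z.mul_nonneg_nonneg; lia).
  pose proof (rm_bound w c al be Z Y r d Y).
  assert (Y*(al-r) <= a*(al-r)) by nia.
  nia.
Qed.
Lemma coreA (w c al be X Y Z a mu r t : Z) :
  0 <= al -> 0 <= X -> 0 <= Y -> 0<= Z -> 0 <= a -> 0 <= mu -> 0 <= w -> 0 <= be ->
  5*w <= 4*c -> al + X <= w -> X+Y<=w -> al+Z <= w -> be+Y <= w -> be+Z <= w ->
  (r = 0 \/ r = al+be+Z-c) -> 0 <= r -> r <= al ->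
  (t = Y \/ t = al - r) ->
  a <= al -> a+mu+X <= w -> X+Y+mu <= w ->
  al * (X+Y+a+mu) <= a*t + al*c.
Proof.
intros; match goal with Ht : t = Y \/ _ |- _ => destruct Ht as [->| ->] end.
- pose proof (caseA w c al X Y a mu (c-w)). nia.
- pose proof (caseB w c al be X Y Z a mu (c-w) r). nia.
Qed.

End ZA.

Lemma bigmin_le_seq (I : eqType) (x : nat) (P : pred I) (F : I -> nat) j (r : seq I) :
  j \in r -> P j -> \big[minn/x]_(i <- r | P i) F i <= F j.
Proof.
elim: r => // a r IH; rewrite in_cons big_cons => /orP[/eqP <-|jr] Pj.
  by rewrite Pj geq_minl.
case: (P a); last exact: IH.
by rewrite geq_min IH // orbT.
Qed.


Set Implicit Arguments. Unset Strict Implicit. Unset Printing Implicit Defensive.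

Definition kd k l (h : FV k l) : nat := match h with
| inl (inl (inl _)) => 0 | inl (inl (inr _)) => 1 | inl (inr (inl _)) => 2
| inl (inr (inr _)) => 3 | inr t => 4 + t end.
Definition idx k l (h : FV k l) : nat := match h with
| inl (inl (inl i)) => i | inl (inl (inr j)) => j.+1 | inl (inr (inl i)) => i
| inl (inr (inr j)) => j.+1 | inr _ => 0 end.

Definition Fe (k1 i1 k2 i2 : nat) : bool := match k1, k2 with
| 0,0 => true | 0,1 => i1 == i2 | 2,2 => true | 2,3 => i1 == i2
| 4,0 => true | 4,1 => true | 4,3 => true | 4,5 => true
| 5,1 => true | 5,2 => true | 5,3 => true
| 6,0 => true | 6,2 => true | _,_ => false end.
Definition Fn k1 i1 k2 i2 := Fe k1 i1 k2 i2 || Fe k2 i2 k1 i1.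

Lemma Fedge0_num k l (h h' : FV k l) : Fedge0 h h' = Fe (kd h) (idx h) (kd h') (idx h').
Proof.
case: h => [[[i|i]|[i|i]]|[[|[|[|n]]] Ht]];
case: h' => [[[j|j]|[j|j]]|[[|[|[|m]]] Ht']] //=.
Qed.

Lemma kd_idx_inj k l (h h' : FV k l) : kd h = kd h' -> idx h = idx h' -> h = h'.
Proof.
case: h => [[[i|i]|[i|i]]|[[|[|[|n]]] Ht]];
case: h' => [[[j|j]|[j|j]]|[[|[|[|m]]] Ht']] //= _;
try (by move=> /val_inj ->); try (by move=> [] /val_inj ->);
by move=> _; congr inr; apply: val_inj.
Qed.

Lemma Fadj_num k l (h h' : FV k l) :
  Fadj h h' = (h != h') && Fn (kd h) (idx h) (kd h') (idx h').
Proof. by rewrite /Fadj /Fn !Fedge0_num. Qed.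

Lemma kd_le6 k l (h : FV k l) : kd h <= 6.
Proof. by case: h => [[[i|i]|[i|i]]|[[|[|[|n]]] Ht]]. Qed.

Lemma idx_xyz k l (h : FV k l) : 4 <= kd h -> idx h = 0.
Proof. by case: h => [[[i|i]|[i|i]]|[[|[|[|n]]] Ht]]. Qed.

Lemma eq_num k l (h h' : FV k l) :
  (h == h') = (kd h == kd h') && (idx h == idx h').
Proof.
apply/eqP/andP => [->|[/eqP E1 /eqP E2]]; first by [].
exact: kd_idx_inj.
Qed.

Section Main.
Variables (k l : nat) (V : finType) (adj : rel V) (p : V -> FV k l).
Hypothesis Hp : forall x y : V, x != y -> adj x y = (p x == p y) || Fadj (p x) (p y).

Definition pkF v := kd (p v).
Definition piF v := idx (p v).

Lemma adjE v v' : v != v' ->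
  adj v v' = ((pkF v == pkF v') && (piF v == piF v')) || Fn (pkF v) (piF v) (pkF v') (piF v').
Proof.
move=> nv; rewrite Hp // Fadj_num eq_num /pkF /piF.
by case: (_ && _).
Qed.

End Main.

Section Pos.
Variables (V : finType) (g : V -> nat).
Definition key v := g v * #|V| + enum_rank v.

Lemma key_inj : injective key.
Proof.
move=> u v; rewrite /key => E.
have Hu : enum_rank u < #|V| := ltn_ord _.
have Hv : enum_rank v < #|V| := ltn_ord _.
have : (g u * #|V| + enum_rank u) %% #|V| = (g v * #|V| + enum_rank v) %% #|V| by rewrite E.
rewrite !modnMDl !modn_small // => /val_inj.
exact: enum_rank_inj.
Qed.

Lemma key_mono u v : g u < g v -> key u < key v.
Proof.
rewrite /key => H.
have Hu : enum_rank u < #|V| := ltn_ord _.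
have : (g u).+1 * #|V| <= g v * #|V| by rewrite leq_mul2r H orbT.
rewrite mulSn.
lia.
Qed.

Definition pos (P : pred V) v := #|[set u | P u && (key u < key v)]|.

Lemma pos_lt (P : pred V) v : P v -> pos P v < #|[set u | P u]|.
Proof.
move=> Pv; apply: proper_card; apply/properP; split.
  by apply/subsetP => u; rewrite !inE => /andP[].
exists v; by rewrite !inE ?Pv ?ltnn.
Qed.

Lemma pos_ltkey (P : pred V) u v : P u -> key u < key v -> pos P u < pos P v.
Proof.
move=> Pu H; apply: proper_card; apply/properP; split.
  apply/subsetP => x; rewrite !inE => /andP[-> H']; exact: ltn_trans H' H.
exists u; by rewrite !inE ?Pu ?ltnn ?H.
Qed.

Lemma pos_inj (P : pred V) u v : P u -> P v -> pos P u = pos P v -> u = v.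
Proof.
move=> Pu Pv E; apply: key_inj.
case: (ltngtP (key u) (key v)) => // H.
  by have := pos_ltkey Pu H; rewrite E ltnn.
by have := pos_ltkey Pv H; rewrite E ltnn.
Qed.

Lemma card_predU (P Q : pred V) : (forall v, P v -> ~~ Q v) ->
  #|[set v | P v || Q v]| = #|[set v | P v]| + #|[set v | Q v]|.
Proof.
move=> D.
have -> : [set v | P v || Q v] = [set v | P v] :|: [set v | Q v].
  by apply/setP => v; rewrite !inE.
rewrite cardsU.
have -> : [set v | P v] :&: [set v | Q v] = set0.
  apply/setP => v; rewrite !inE; apply/negbTE; apply/negP => /andP[Pv Qv].
  by move: (D v Pv); rewrite Qv.
by rewrite cards0 subn0.
Qed.

Lemma card_sub (P Q : pred V) : (forall v, P v -> Q v) ->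
  #|[set v | P v]| <= #|[set v | Q v]|.
Proof. move=> H; apply: subset_leq_card; apply/subsetP => v; rewrite !inE; exact: H. Qed.

Lemma pos_grp (P : pred V) v : P v ->
  #|[set u | P u && (g u < g v)]| <= pos P v /\
  pos P v < #|[set u | P u && (g u < g v)]| + #|[set u | P u && (g u == g v)]|.
Proof.
move=> Pv; split.
  apply: card_sub => u /andP[-> H] /=; exact: key_mono.
rewrite -card_predU; last by move=> u /andP[_ H]; rewrite negb_and ltn_eqF ?orbT.
apply: proper_card; apply/properP; split.
  apply/subsetP => u; rewrite !inE => /andP[-> H] /=.
  case: (ltngtP (g u) (g v)) => // H'.
  by have := key_mono H'; rewrite ltnNge (ltnW H).
exists v; by rewrite !inE ?Pv ?eqxx ?orbT ?ltnn.
Qed.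

Lemma grp_le (P : pred V) i :
  #|[set u | P u && (g u < i)]| + #|[set u | P u && (g u == i)]| <= #|[set u | P u]|.
Proof.
rewrite -card_predU; last by move=> u /andP[_ H]; rewrite negb_and ltn_eqF ?orbT.
by apply: card_sub => u /orP[] /andP[].
Qed.

End Pos.

Lemma card_predU_le (T : finType) (P Q : pred T) :
  #|[set x | P x || Q x]| <= #|[set x | P x]| + #|[set x | Q x]|.
Proof.
have -> : [set x | P x || Q x] = [set x | P x] :|: [set x | Q x].
  by apply/setP => v; rewrite !inE.
by rewrite cardsU leq_subr.
Qed.

Lemma card_int n lo hi : #|[set x : 'I_n | (lo <= x) && (x < hi)]| <= hi - lo.
Proof.
elim: hi => [|hi IH].
  by rewrite (_ : [set _ | _] = set0) ?cards0 //; apply/setP => x; rewrite !inE ltn0 andbF.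
case: (leqP lo hi) => Hl; last first.
  rewrite (_ : [set _ | _] = set0) ?cards0 //; apply/setP => x; rewrite !inE.
  by apply/negbTE; apply/negP => /andP[H1 H2]; lia.
apply: leq_trans (_ : #|[set x : 'I_n | ((lo <= x) && (x < hi)) || (nat_of_ord x == hi)]| <= _).
  by apply: card_sub => x /andP[-> /=]; rewrite ltnS leq_eqVlt orbC.
apply: leq_trans (card_predU_le _ _) _.
have H1 : #|[set x : 'I_n | nat_of_ord x == hi]| <= 1.
  apply/card_le1_eqP => x y; rewrite !inE => /eqP E1 /eqP E2; apply: val_inj; by rewrite /= E1 E2.
by rewrite subSn // -addn1; apply: leq_add IH H1.
Qed.

Lemma card_int_le n (P : pred 'I_n) lo hi : (forall x : 'I_n, P x -> (lo <= x) && (x < hi)) ->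
  #|[set x | P x]| <= hi - lo.
Proof. move=> H; apply: leq_trans (card_int n lo hi); exact: card_sub. Qed.

Lemma div_super m n d : m %/ d + n %/ d <= (m + n) %/ d.
Proof.
case: d => [|d]; first by rewrite !divn0.
rewrite leq_divRL // mulnDl.
by apply: leq_add; apply: leq_divM.
Qed.

Section Q.
Variables (t al : nat).
Hypothesis tal : t <= al.
Definition q p := p * t %/ al.
Definition hq p := p - q p.

Lemma q_le p : q p <= p.
Proof.
rewrite /q; case: (posnP al) => [->|ap]; first by rewrite divn0.
have H : p * t <= p * al by rewrite leq_mul2l tal orbT.
by apply: leq_trans (leq_div2r al H) _; rewrite mulnK.
Qed.

Lemma q_mono p p' : p <= p' -> q p <= q p'.
Proof. by move=> H; apply: leq_div2r; rewrite leq_mul2r H orbT. Qed.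

Lemma q_add p m : q (p + m) <= q p + m.
Proof.
rewrite /q; case: (posnP al) => [->|ap]; first by rewrite !divn0.
apply: leq_trans (_ : (p * t + m * al) %/ al <= _).
  by apply: leq_div2r; rewrite mulnDl leq_add2l leq_mul2l tal orbT.
by rewrite divnDMl.
Qed.

Lemma hq_mono p p' : p <= p' -> hq p <= hq p'.
Proof.
move=> H; rewrite /hq.
have := q_add p (p' - p); rewrite subnKC // => H1.
have := q_le p; have := q_le p'; have := q_mono H. lia.
Qed.

Lemma q_al : 0 < al -> q al = t.
Proof. move=> ap; rewrite /q mulKn //. Qed.

Lemma hq_al : 0 < al -> hq al = al - t.
Proof. by move=> ap; rewrite /hq q_al. Qed.

Lemma q_super s a : q s + a * t %/ al <= q (s + a).
Proof. by rewrite /q mulnDl div_super. Qed.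

Lemma nJ_step p : ~~ (q p < q p.+1) -> hq p.+1 = (hq p).+1.
Proof.
move=> H; have E : q p.+1 = q p.
  by apply/eqP; rewrite eqn_leq leqNgt H /= q_mono.
rewrite /hq E; have := q_le p; lia.
Qed.

Lemma q_lt_t p : p < al -> q p.+1 <= t.
Proof. by move=> H; have := q_mono H; rewrite q_al //; case: al H. Qed.

Definition gg (b0 b1 p : nat) := if q p < q p.+1 then b0 + q p else b1 + hq p.

Lemma gg_range b0 b1 p : p < al ->
  (b0 <= gg b0 b1 p < b0 + t) \/
  (gg b0 b1 p = b1 + hq p /\ hq p.+1 = (hq p).+1 /\ hq p < al - t).
Proof.
move=> H; rewrite /gg; case: ifP => J.
  left; have := q_lt_t H; lia.
right; have E := nJ_step (negbT J); split=> //; split=> //.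
have := hq_mono H; rewrite hq_al ?(leq_ltn_trans _ H) //; lia.
Qed.

Lemma gg_inj b0 b1 p p' : (b0 + t <= b1) \/ (b1 + (al - t) <= b0) -> p < al -> p' < al ->
  gg b0 b1 p = gg b0 b1 p' -> p = p'.
Proof.
move=> Hb.
wlog: p p' / p <= p'.
  move=> W Hp Hp' E; case: (leqP p p') => H; first exact: W.
  by apply/esym; apply: W => //; apply: ltnW.
rewrite leq_eqVlt => /orP[/eqP //|Hlt] Hp Hp'.
have Q1 := q_lt_t Hp; have Q2 := q_lt_t Hp'.
have A0 : 0 < al by case: al Hp.
have H1 := hq_mono (Hp : p.+1 <= al); have H2 := hq_mono (Hp' : p'.+1 <= al).
rewrite hq_al // in H1 H2.
rewrite /gg; case: ifP => J; case: ifP => J'.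
- have := q_mono Hlt; lia.
- have := nJ_step (negbT J'); lia.
- have := nJ_step (negbT J); lia.
- have := hq_mono Hlt; have := nJ_step (negbT J); lia.
Qed.
End Q.

Section Col.
Variables (V : finType) (adj : rel V) (pk pi : V -> nat).
Hypothesis adj_irr : irreflexive adj.
Hypothesis HadjE : forall v v', v != v' ->
  adj v v' = ((pk v == pk v') && (pi v == pi v')) || Fn (pk v) (pi v) (pk v') (pi v').
Hypothesis Hk6 : forall v, pk v <= 6.
Hypothesis Hxyz : forall v, 4 <= pk v -> pi v = 0.

Definition w := omega adj.
Definition c := (5 * w + 3) %/ 4.
Definition nk kk := #|[set v | pk v == kk]|.
Definition cl kk i := #|[set v | (pk v == kk) && (pi v == i)]|.
Definition sc kk i := #|[set v | (pk v == kk) && (pi v < i)]|.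

Lemma clique_le (S : {set V}) :
  (forall v v', v \in S -> v' \in S -> v != v' -> adj v v') -> #|S| <= w.
Proof.
move=> H; rewrite /w /omega.
apply: (leq_bigmax_cond (F := fun A : {set V} => #|A|)).
apply/forallP => x; apply/implyP => xS; apply/forallP => y; apply/implyP => yS.
apply/implyP => nxy; exact: H.
Qed.

Lemma clique_num (Q : nat -> nat -> bool) :
  (forall k1 i1 k2 i2, Q k1 i1 -> Q k2 i2 -> ((k1 == k2) && (i1 == i2)) || Fn k1 i1 k2 i2) ->
  #|[set v | Q (pk v) (pi v)]| <= w.
Proof.
move=> H; apply: clique_le => v v'; rewrite !inE => Qv Qv' nv.
rewrite HadjE //; exact: H.
Qed.

Lemma nkE kk : 4 <= kk -> #|[set v | (pk v == kk) && (pi v == 0)]| = nk kk.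
Proof.
move=> H; apply: eq_card => v; rewrite !inE.
case E: (pk v == kk) => //=; rewrite Hxyz //; move/eqP: E => ->; done.
Qed.

Lemma bAX : nk 0 + nk 4 <= w.
Proof.
rewrite -(nkE (kk:=4)) // -card_predU; last by move=> v /eqP->.
apply: (clique_num (Q := fun kk i => (kk == 0) || ((kk == 4) && (i == 0)))).
move=> k1 i1 k2 i2 /orP[/eqP->|/andP[/eqP-> /eqP->]] /orP[/eqP->|/andP[/eqP-> /eqP->]].
all: by rewrite /Fn /= ?eqxx ?orbT.
Qed.


Ltac two2 := move=> k1 i1 k2 i2 /orP[/andP[/eqP-> /eqP->]|/andP[/eqP-> /eqP->]] /orP[/andP[/eqP-> /eqP->]|/andP[/eqP-> /eqP->]];
  by rewrite /Fn /= ?eqxx ?orbT.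
Ltac three3 := move=> k1 i1 k2 i2
  /orP[/andP[/eqP-> /eqP->]|/orP[/andP[/eqP-> /eqP->]|/andP[/eqP-> /eqP->]]]
  /orP[/andP[/eqP-> /eqP->]|/orP[/andP[/eqP-> /eqP->]|/andP[/eqP-> /eqP->]]];
  by rewrite /Fn /= ?eqxx ?orbT.

Lemma bAZ : nk 0 + nk 6 <= w.
Proof.
rewrite -(nkE (kk:=6)) // -card_predU; last by move=> v /eqP->.
apply: (clique_num (Q := fun kk i => (kk == 0) || ((kk == 6) && (i == 0)))).
move=> k1 i1 k2 i2 /orP[/eqP->|/andP[/eqP-> /eqP->]] /orP[/eqP->|/andP[/eqP-> /eqP->]].
all: by rewrite /Fn /= ?eqxx ?orbT.
Qed.

Lemma bBY : nk 2 + nk 5 <= w.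
Proof.
rewrite -(nkE (kk:=5)) // -card_predU; last by move=> v /eqP->.
apply: (clique_num (Q := fun kk i => (kk == 2) || ((kk == 5) && (i == 0)))).
move=> k1 i1 k2 i2 /orP[/eqP->|/andP[/eqP-> /eqP->]] /orP[/eqP->|/andP[/eqP-> /eqP->]].
all: by rewrite /Fn /= ?eqxx ?orbT.
Qed.

Lemma bBZ : nk 2 + nk 6 <= w.
Proof.
rewrite -(nkE (kk:=6)) // -card_predU; last by move=> v /eqP->.
apply: (clique_num (Q := fun kk i => (kk == 2) || ((kk == 6) && (i == 0)))).
move=> k1 i1 k2 i2 /orP[/eqP->|/andP[/eqP-> /eqP->]] /orP[/eqP->|/andP[/eqP-> /eqP->]].
all: by rewrite /Fn /= ?eqxx ?orbT.
Qed.

Lemma bXY : nk 4 + nk 5 <= w.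
Proof.
rewrite -(nkE (kk:=4)) // -(nkE (kk:=5)) // -card_predU; last by move=> v /andP[/eqP->].
apply: (clique_num (Q := fun kk i => ((kk == 4) && (i == 0)) || ((kk == 5) && (i == 0)))).
two2.
Qed.

Lemma bAUX i : cl 0 i + cl 1 i + nk 4 <= w.
Proof.
rewrite -(nkE (kk:=4)) // -card_predU; last by move=> v /andP[/eqP->].
rewrite -card_predU; last by move=> v /orP[] /andP[/eqP->].
have E : forall v, ((pk v == 0) && (pi v == i) || (pk v == 1) && (pi v == i)) || (pk v == 4) && (pi v == 0) =
  ((pk v == 0) && (pi v == i) || ((pk v == 1) && (pi v == i) || (pk v == 4) && (pi v == 0))).
  by move=> v; rewrite orbA.
under eq_finset do rewrite E.
apply: (clique_num (Q := fun kk ii => ((kk == 0) && (ii == i)) || (((kk == 1) && (ii == i)) || ((kk == 4) && (ii == 0))))).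
three3.
Qed.

Lemma bXYU i : nk 4 + nk 5 + cl 1 i <= w.
Proof.
rewrite -(nkE (kk:=4)) // -(nkE (kk:=5)) // -card_predU; last by move=> v /andP[/eqP->].
rewrite -card_predU; last by move=> v /orP[] /andP[/eqP->].
have E : forall v, ((pk v == 4) && (pi v == 0) || (pk v == 5) && (pi v == 0)) || (pk v == 1) && (pi v == i) =
  ((pk v == 4) && (pi v == 0) || ((pk v == 5) && (pi v == 0) || (pk v == 1) && (pi v == i))).
  by move=> v; rewrite orbA.
under eq_finset do rewrite E.
apply: (clique_num (Q := fun kk ii => ((kk == 4) && (ii == 0)) || (((kk == 5) && (ii == 0)) || ((kk == 1) && (ii == i))))).
three3.
Qed.

Lemma bBWY i : cl 2 i + cl 3 i + nk 5 <= w.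
Proof.
rewrite -(nkE (kk:=5)) // -card_predU; last by move=> v /andP[/eqP->].
rewrite -card_predU; last by move=> v /orP[] /andP[/eqP->].
have E : forall v, ((pk v == 2) && (pi v == i) || (pk v == 3) && (pi v == i)) || (pk v == 5) && (pi v == 0) =
  ((pk v == 2) && (pi v == i) || ((pk v == 3) && (pi v == i) || (pk v == 5) && (pi v == 0))).
  by move=> v; rewrite orbA.
under eq_finset do rewrite E.
apply: (clique_num (Q := fun kk ii => ((kk == 2) && (ii == i)) || (((kk == 3) && (ii == i)) || ((kk == 5) && (ii == 0))))).
three3.
Qed.

Lemma bXYW i : nk 4 + nk 5 + cl 3 i <= w.
Proof.
rewrite -(nkE (kk:=4)) // -(nkE (kk:=5)) // -card_predU; last by move=> v /andP[/eqP->].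
rewrite -card_predU; last by move=> v /orP[] /andP[/eqP->].
have E : forall v, ((pk v == 4) && (pi v == 0) || (pk v == 5) && (pi v == 0)) || (pk v == 3) && (pi v == i) =
  ((pk v == 4) && (pi v == 0) || ((pk v == 5) && (pi v == 0) || (pk v == 3) && (pi v == i))).
  by move=> v; rewrite orbA.
under eq_finset do rewrite E.
apply: (clique_num (Q := fun kk ii => ((kk == 4) && (ii == 0)) || (((kk == 5) && (ii == 0)) || ((kk == 3) && (ii == i))))).
three3.
Qed.


Lemma c_ge : 5 * w <= 4 * c.
Proof.
rewrite /c; have := divn_eq (5 * w + 3) 4; have := ltn_pmod (5 * w + 3) (isT : 0 < 4).
set m := (5 * w + 3) %% 4; set d := (5 * w + 3) %/ 4; lia.
Qed.

Definition r := nk 0 + nk 2 + nk 6 - c.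
Definition t := minn (nk 5) (nk 0 - r).
Definition t' := minn (nk 4) (nk 2 - r).
Definition F0 := nk 0 + nk 2 - r.

Lemma basic : 5*w <= 4*c /\ nk 0 + nk 4 <= w /\ nk 0 + nk 6 <= w /\ nk 2 + nk 5 <= w /\
  nk 2 + nk 6 <= w /\ nk 4 + nk 5 <= w.
Proof. split; [exact: c_ge|split; [exact: bAX|split; [exact: bAZ|split; [exact: bBY|split; [exact: bBZ|exact: bXY]]]]]. Qed.

Lemma rfacts : (r = 0 /\ nk 0 + nk 2 + nk 6 <= c \/ r + c = nk 0 + nk 2 + nk 6) /\
  r <= nk 0 /\ r <= nk 2 /\ F0 + r = nk 0 + nk 2.
Proof.
have := basic; rewrite /F0 /r; move=> *.
have [r0 [Hr1 Hr2]] : exists r0, r0 = nk 0 + nk 2 + nk 6 - c /\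
   (r0 = 0 /\ nk 0 + nk 2 + nk 6 <= c \/ r0 + c = nk 0 + nk 2 + nk 6).
  exists (nk 0 + nk 2 + nk 6 - c); split=> //; lia.
rewrite -Hr1; lia.
Qed.

Lemma tfacts : ((t = nk 5 /\ nk 5 <= nk 0 - r) \/ (t = nk 0 - r /\ nk 0 - r <= nk 5)) /\
  ((t' = nk 4 /\ nk 4 <= nk 2 - r) \/ (t' = nk 2 - r /\ nk 2 - r <= nk 4)).
Proof.
rewrite /t /t' /minn; split; (case: ltnP => H; [left|right]; split => //; lia).
Qed.

Lemma Fneed : F0 + (nk 5 - t) <= c - nk 4 + t'.
Proof. have := basic; have := rfacts; have := tfacts; lia. Qed.

Ltac ar := have := basic; have := rfacts; have := tfacts; have := Fneed; lia.

Definition FXY (x : nat) := (x < t) || ((F0 <= x) && (x < F0 + (nk 5 - t))) ||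
  ((F0 - t' <= x) && (x < F0)) || (c - nk 4 + t' <= x).
Definition forbU i (x : nat) := FXY x ||
  ((t + hq t (nk 0) (sc 0 i) <= x) && (x < t + hq t (nk 0) (sc 0 i + cl 0 i))).
Definition forbW i (x : nat) := FXY x ||
  ((nk 0 - r + hq t' (nk 2) (sc 2 i) <= x) && (x < nk 0 - r + hq t' (nk 2) (sc 2 i + cl 2 i))).
Definition availU i := [set x : 'I_c | ~~ forbU i x].
Definition availW i := [set x : 'I_c | ~~ forbW i x].

Lemma card_FXY : #|[set x : 'I_c | FXY x]| <= nk 4 + nk 5.
Proof.
rewrite /FXY.
apply: leq_trans (card_predU_le _ _) _.
apply: leq_trans (leq_add (card_predU_le _ _) (leqnn _)) _.
apply: leq_trans (leq_add (leq_add (card_predU_le _ _) (leqnn _)) (leqnn _)) _.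
have H1 := @card_int_le c (fun x : 'I_c => nat_of_ord x < t) 0 t (fun x H => H).
have H2 := @card_int_le c (fun x : 'I_c => (F0 <= x) && (x < F0 + (nk 5 - t))) F0 (F0 + (nk 5 - t)) (fun x H => H).
have H3 := @card_int_le c (fun x : 'I_c => (F0 - t' <= x) && (x < F0)) (F0 - t') F0 (fun x H => H).
have H4 := @card_int_le c (fun x : 'I_c => c - nk 4 + t' <= x) (c - nk 4 + t') c (fun x H => introT andP (conj H (ltn_ord x))).
have := leq_add (leq_add (leq_add H1 H2) H3) H4.
move=> H; apply: leq_trans H _.
ar.
Qed.


Lemma card_forb_gen (F : nat -> bool) lo hi :
  #|[set x : 'I_c | FXY x || ((lo <= x) && (x < hi))]| <= nk 4 + nk 5 + (hi - lo).
Proof.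
apply: leq_trans (card_predU_le _ _) _.
apply: leq_add; first exact: card_FXY.
exact: (@card_int_le c (fun x : 'I_c => (lo <= x) && (x < hi)) lo hi (fun x H => H)).
Qed.

Lemma card_avail_gen (f : nat -> bool) :
  #|[set x : 'I_c | ~~ f x]| + #|[set x : 'I_c | f x]| = c.
Proof.
rewrite -card_predU; last by move=> x ->.
rewrite -[RHS](card_ord c); apply: eq_card => x; rewrite !inE; by case: (f x).
Qed.

Lemma arithU (A B X Y ZZ a mu s tt rr : nat) :
  5*w <= 4*c -> A + X <= w -> A + ZZ <= w -> B + Y <= w -> B + ZZ <= w -> X + Y <= w ->
  (rr = 0 /\ A + B + ZZ <= c \/ rr + c = A + B + ZZ) -> rr <= A ->
  ((tt = Y /\ Y <= A - rr) \/ (tt = A - rr /\ A - rr <= Y)) ->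
  s + a <= A -> a + mu + X <= w -> X + Y + mu <= w ->
  mu + (X + Y + (hq tt A (s + a) - hq tt A s)) <= c.
Proof.
move=> *.
have tA : tt <= A by lia.
have core : A * (X + Y + a + mu) <= a * tt + A * c.
  suff: (Z.of_nat A * (Z.of_nat X + Z.of_nat Y + Z.of_nat a + Z.of_nat mu) <=
     Z.of_nat a * Z.of_nat tt + Z.of_nat A * Z.of_nat c)%Z by lia.
  apply: (coreA (Z.of_nat w) (Z.of_nat c) (Z.of_nat A) (Z.of_nat B) (Z.of_nat X) (Z.of_nat Y) (Z.of_nat ZZ) (Z.of_nat a) (Z.of_nat mu) (Z.of_nat rr) (Z.of_nat tt)); lia.
have H1 := q_super tt A s a.
have H2 := q_le tA s. have H3 := q_le tA (s + a).
case: (posnP A) => HA.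
  have a0 : a = 0 by lia.
  subst a; rewrite addn0 subnn; lia.
have H4 : X + Y + a + mu - c <= a * tt %/ A.
  rewrite leq_divRL //.
  case: (leqP (X + Y + a + mu) c) => Hc; first by rewrite (_ : _ - _ = 0) //; lia.
  rewrite mulnBl leq_subLR mulnC; apply: leq_trans core _; by rewrite addnC [A * c]mulnC.
rewrite /hq; lia.
Qed.

Lemma s_le kk i : sc kk i + cl kk i <= nk kk.
Proof. exact: (grp_le pi (fun u => pk u == kk) i). Qed.

Lemma availU_card i : cl 1 i <= #|availU i|.
Proof.
have E := card_avail_gen (forbU i).
have C := card_forb_gen (fun _ => true) (t + hq t (nk 0) (sc 0 i)) (t + hq t (nk 0) (sc 0 i + cl 0 i)).
have Hs := s_le 0 i.
have := basic; have := rfacts; have := tfacts; move=> [T1 T2] [R1 [R2 [R3 R4]]] [B1 [B2 [B3 [B4 [B5 B6]]]]].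
have Ar := arithU (B:=nk 2) (ZZ := nk 6) (mu := cl 1 i) B1 B2 B3 B4 B5 B6 R1 R2 T1 Hs (bAUX i) (bXYU i).
rewrite /availU; move: E C; rewrite /forbU.
set AA := #|_|; set BB := #|_|. lia.
Qed.

Lemma availW_card i : cl 3 i <= #|availW i|.
Proof.
have E := card_avail_gen (forbW i).
have C := card_forb_gen (fun _ => true) (nk 0 - r + hq t' (nk 2) (sc 2 i)) (nk 0 - r + hq t' (nk 2) (sc 2 i + cl 2 i)).
have Hs := s_le 2 i.
have := basic; have := rfacts; have := tfacts; move=> [T1 T2] [R1 [R2 [R3 R4]]] [B1 [B2 [B3 [B4 [B5 B6]]]]].
have R1' : r = 0 /\ nk 2 + nk 0 + nk 6 <= c \/ r + c = nk 2 + nk 0 + nk 6 by lia.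
have Ar := arithU (A := nk 2) (B:=nk 0) (X := nk 5) (Y := nk 4) (ZZ := nk 6) (mu := cl 3 i) B1 B4 B5 B2 B3 (ltac:(lia)) R1' R3 T2 Hs (ltac:(have := bBWY i; lia)) (ltac:(have := bXYW i; lia)).
rewrite /availW; move: E C; rewrite /forbW.
set AA := #|_|; set BB := #|_|. lia.
Qed.

Definition posk kk v := pos pi (fun u => pk u == kk) v.
Definition posc v := pos pi (fun u => (pk u == pk v) && (pi u == pi v)) v.
Definition colX m := if m < t' then F0 - t' + m else c - nk 4 + m.
Definition colY m := if m < t then m else F0 + m - t.
Definition col v :=
  if pk v == 0 then gg t (nk 0) 0 t (posk 0 v)
  else if pk v == 1 then nth 0 [seq val x | x <- enum (availU (pi v))] (posc v)
  else if pk v == 2 then gg t' (nk 2) (F0 - t') (nk 0 - r) (posk 2 v)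
  else if pk v == 3 then nth 0 [seq val x | x <- enum (availW (pi v))] (posc v)
  else if pk v == 4 then colX (posk 4 v)
  else if pk v == 5 then colY (posk 5 v) else F0 + posk 6 v.

Lemma posk_lt kk v : pk v == kk -> posk kk v < nk kk.
Proof. move=> H; exact: (pos_lt pi (P := fun u => pk u == kk) H). Qed.

Lemma posk_grp kk v : pk v == kk ->
  sc kk (pi v) <= posk kk v /\ posk kk v < sc kk (pi v) + cl kk (pi v).
Proof. move=> H; exact: (pos_grp pi (P := fun u => pk u == kk) H). Qed.

Lemma t_le : t <= nk 0 - r. Proof. have := tfacts; lia. Qed.
Lemma t'_le : t' <= nk 2 - r. Proof. have := tfacts; lia. Qed.
Lemma t_le0 : t <= nk 0. Proof. have := tfacts; lia. Qed.
Lemma t'_le2 : t' <= nk 2. Proof. have := tfacts; lia. Qed.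

Lemma colA_spec v : pk v == 0 -> col v < nk 0 /\ forbU (pi v) (col v).
Proof.
move=> H; rewrite /col H.
have Hm := posk_lt H; have [G1 G2] := posk_grp H.
set m := posk 0 v in Hm G1 G2 *.
have HS := s_le 0 (pi v).
have tA := t_le0.
case: (gg_range tA 0 t Hm) => [|[E [E1 E2]]].
  move=> /andP[_ L]; split; first lia.
  by rewrite /forbU /FXY L.
have M1 := hq_mono tA G1.
have M2 := hq_mono tA (G2 : m.+1 <= _).
rewrite E; split; first lia.
rewrite /forbU; apply/orP; right; apply/andP; split; lia.
Qed.

Lemma colB_spec v : pk v == 2 -> nk 0 - r <= col v < F0 /\ forbW (pi v) (col v).
Proof.
move=> H; rewrite /col (eqP H) /=.
have Hm := posk_lt H; have [G1 G2] := posk_grp H.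
set m := posk 2 v in Hm G1 G2 *.
have HS := s_le 2 (pi v).
have tA := t'_le2. have := rfacts; have := t'_le => T1 R.
case: (gg_range tA (F0 - t') (nk 0 - r) Hm) => [|[E [E1 E2]]].
  move=> /andP[L1 L2]; split; first (apply/andP; split; lia).
  rewrite /forbW /FXY; apply/orP; left; apply/orP; left; apply/orP; right; apply/andP; split; lia.
have M1 := hq_mono tA G1.
have M2 := hq_mono tA (G2 : m.+1 <= _).
rewrite E; split; first (apply/andP; split; lia).
rewrite /forbW; apply/orP; right; apply/andP; split; lia.
Qed.

Lemma nth_avail (A : {set 'I_c}) m : m < #|A| ->
  exists2 x : 'I_c, x \in A & nth 0 [seq val x | x <- enum A] m = val x.
Proof.
move=> Hm.
have Hs : m < size [seq val x | x <- enum A] by rewrite size_map -cardE.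
have := mem_nth 0 Hs; case/mapP => x; rewrite mem_enum => xA ->.
by exists x.
Qed.

Lemma nth_avail_inj (A : {set 'I_c}) m m' : m < #|A| -> m' < #|A| ->
  nth 0 [seq val x | x <- enum A] m = nth 0 [seq val x | x <- enum A] m' -> m = m'.
Proof.
move=> H H' E.
have U : uniq [seq val x | x <- enum A] by rewrite map_inj_uniq ?enum_uniq //; exact: val_inj.
have Hs : m < size [seq val x | x <- enum A] by rewrite size_map -cardE.
have Hs' : m' < size [seq val x | x <- enum A] by rewrite size_map -cardE.
by apply/eqP; rewrite -(nth_uniq 0 Hs Hs' U) E.
Qed.

Lemma posc_lt v : posc v < cl (pk v) (pi v).
Proof. by apply: (pos_lt pi (P := fun u => (pk u == pk v) && (pi u == pi v))); rewrite !eqxx. Qed.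

Lemma posc_inj v v' : pk v = pk v' -> pi v = pi v' -> posc v = posc v' -> v = v'.
Proof.
move=> E1 E2; rewrite /posc -E1 -E2 => E.
by apply: (pos_inj (P := fun u => (pk u == pk v) && (pi u == pi v))) E; rewrite ?E1 ?E2 !eqxx.
Qed.

Lemma colU_spec v : pk v == 1 -> ~~ forbU (pi v) (col v) /\ col v < c.
Proof.
move=> H; rewrite /col (eqP H) /=.
have Hm := posc_lt v; rewrite (eqP H) in Hm.
have [x xA ->] := nth_avail (leq_trans Hm (availU_card _)).
by move: xA; rewrite inE => ->; split => //; apply: ltn_ord.
Qed.

Lemma colW_spec v : pk v == 3 -> ~~ forbW (pi v) (col v) /\ col v < c.
Proof.
move=> H; rewrite /col (eqP H) /=.
have Hm := posc_lt v; rewrite (eqP H) in Hm.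
have [x xA ->] := nth_avail (leq_trans Hm (availW_card _)).
by move: xA; rewrite inE => ->; split => //; apply: ltn_ord.
Qed.

Lemma colU_inj v v' : pk v == 1 -> pk v' == 1 -> pi v = pi v' -> col v = col v' -> v = v'.
Proof.
move=> H H' E; rewrite /col (eqP H) (eqP H') /= E => C.
have Hm := posc_lt v; rewrite (eqP H) in Hm.
have Hm' := posc_lt v'; rewrite (eqP H') -E in Hm'.
apply: posc_inj => //; first by rewrite (eqP H) (eqP H').
apply: (nth_avail_inj (A := availU (pi v'))) => //.
  by rewrite -E; apply: leq_trans Hm (availU_card _).
by rewrite -E; apply: leq_trans Hm' (availU_card _).
Qed.

Lemma colW_inj v v' : pk v == 3 -> pk v' == 3 -> pi v = pi v' -> col v = col v' -> v = v'.
Proof.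
move=> H H' E; rewrite /col (eqP H) (eqP H') /= E => C.
have Hm := posc_lt v; rewrite (eqP H) in Hm.
have Hm' := posc_lt v'; rewrite (eqP H') -E in Hm'.
apply: posc_inj => //; first by rewrite (eqP H) (eqP H').
apply: (nth_avail_inj (A := availW (pi v'))) => //.
  by rewrite -E; apply: leq_trans Hm (availW_card _).
by rewrite -E; apply: leq_trans Hm' (availW_card _).
Qed.

Ltac ar2 := have := basic; have := rfacts; have := tfacts; have := Fneed; lia.

Lemma colA_inj v v' : pk v == 0 -> pk v' == 0 -> col v = col v' -> v = v'.
Proof.
move=> H H'; rewrite /col H H' /= => E.
apply: (pos_inj (g := pi) (P := fun u => pk u == 0) H H').
exact: (gg_inj t_le0 (b0 := 0) (b1 := t) (or_introl (leqnn t)) (posk_lt H) (posk_lt H') E).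
Qed.

Lemma colB_inj v v' : pk v == 2 -> pk v' == 2 -> col v = col v' -> v = v'.
Proof.
move=> H H'; rewrite /col (eqP H) (eqP H') /= => E.
apply: (pos_inj (g := pi) (P := fun u => pk u == 2) H H').
have Hb : (F0 - t' + t' <= nk 0 - r) \/ (nk 0 - r + (nk 2 - t') <= F0 - t') by right; ar2.
exact: (gg_inj t'_le2 Hb (posk_lt H) (posk_lt H') E).
Qed.

Lemma colX_spec v : pk v == 4 -> FXY (col v) /\ nk 0 <= col v < c /\
  ((F0 - t' <= col v < F0) \/ (c - nk 4 + t' <= col v)).
Proof.
move=> H; rewrite /col (eqP H) /= /colX.
have Hm := posk_lt H.
case: ifP => L; rewrite /FXY.
  split; first (apply/orP; left; apply/orP; right; apply/andP; split; ar2).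
  split; first (apply/andP; split; ar2). left; apply/andP; split; ar2.
split; first (apply/orP; right; ar2).
split; first (apply/andP; split; ar2). right; ar2.
Qed.

Lemma colX_inj v v' : pk v == 4 -> pk v' == 4 -> col v = col v' -> v = v'.
Proof.
move=> H H'; rewrite /col (eqP H) (eqP H') /= /colX => E.
apply: (pos_inj (g := pi) (P := fun u => pk u == 4) H H'); rewrite -/(posk 4 v) -/(posk 4 v').
have Hm := posk_lt H; have Hm' := posk_lt H'.
move: E; case: (ltnP (posk 4 v) t') => L1; case: (ltnP (posk 4 v') t') => L2; ar2.
Qed.

Lemma colY_spec v : pk v == 5 -> FXY (col v) /\ col v < c /\
  ((col v < t) \/ (F0 <= col v < F0 + (nk 5 - t))).
Proof.
move=> H; rewrite /col (eqP H) /= /colY.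
have Hm := posk_lt H.
case: ifP => L; rewrite /FXY.
  split; first (by rewrite L).
  split; first ar2. by left.
split; first (apply/orP; left; apply/orP; left; apply/orP; right; apply/andP; split; ar2).
split; first ar2. right; apply/andP; split; ar2.
Qed.

Lemma colY_inj v v' : pk v == 5 -> pk v' == 5 -> col v = col v' -> v = v'.
Proof.
move=> H H'; rewrite /col (eqP H) (eqP H') /= /colY => E.
apply: (pos_inj (g := pi) (P := fun u => pk u == 5) H H'); rewrite -/(posk 5 v) -/(posk 5 v').
have Hm := posk_lt H; have Hm' := posk_lt H'.
move: E; case: (ltnP (posk 5 v) t) => L1; case: (ltnP (posk 5 v') t) => L2; ar2.
Qed.

Lemma kind6 v : pk v != 0 -> pk v != 1 -> pk v != 2 -> pk v != 3 -> pk v != 4 -> pk v != 5 -> pk v == 6.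
Proof. have := Hk6 v; lia. Qed.

Lemma colZ_spec v : pk v == 6 -> F0 <= col v < F0 + nk 6 /\ col v < c.
Proof.
move=> H; rewrite /col (eqP H) /=.
have Hm := posk_lt H.
split; [apply/andP; split|]; ar2.
Qed.

Lemma colZ_inj v v' : pk v == 6 -> pk v' == 6 -> col v = col v' -> v = v'.
Proof.
move=> H H'; rewrite /col (eqP H) (eqP H') /= => E.
apply: (pos_inj (g := pi) (P := fun u => pk u == 6) H H'); rewrite -/(posk 6 v) -/(posk 6 v'); lia.
Qed.

Lemma F0_le_c : F0 <= c. Proof. ar2. Qed.
Lemma nk0_le_c : nk 0 <= c. Proof. ar2. Qed.

Lemma col_lt v : col v < c.
Proof.
case: (eqVneq (pk v) 0) => [/eqP H|N0]; first by have [L _] := colA_spec H; have := nk0_le_c; lia.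
case: (eqVneq (pk v) 1) => [/eqP H|N1]; first by have [_ L] := colU_spec H.
case: (eqVneq (pk v) 2) => [/eqP H|N2]; first by have [L _] := colB_spec H; have := F0_le_c; lia.
case: (eqVneq (pk v) 3) => [/eqP H|N3]; first by have [_ L] := colW_spec H.
case: (eqVneq (pk v) 4) => [/eqP H|N4]; first by have [_ [L _]] := colX_spec H; lia.
case: (eqVneq (pk v) 5) => [/eqP H|N5]; first by have [_ [L _]] := colY_spec H.
by have [_ L] := colZ_spec (kind6 N0 N1 N2 N3 N4 N5).
Qed.

Lemma q01 v v' : pk v == 0 -> pk v' == 1 -> pi v = pi v' -> col v != col v'.
Proof.
move=> H H' Ep; have [_ F] := colA_spec H; have [NF _] := colU_spec H'.
by apply/eqP => E; move: NF; rewrite -E -Ep F.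
Qed.
Lemma q23 v v' : pk v == 2 -> pk v' == 3 -> pi v = pi v' -> col v != col v'.
Proof.
move=> H H' Ep; have [_ F] := colB_spec H; have [NF _] := colW_spec H'.
by apply/eqP => E; move: NF; rewrite -E -Ep F.
Qed.
Lemma q04 v v' : pk v == 0 -> pk v' == 4 -> col v != col v'.
Proof. move=> H H'; have [L _] := colA_spec H; have [_ [L' _]] := colX_spec H'; apply/eqP; lia. Qed.
Lemma q06 v v' : pk v == 0 -> pk v' == 6 -> col v != col v'.
Proof. move=> H H'; have [L _] := colA_spec H; have [L' _] := colZ_spec H'; apply/eqP; ar2. Qed.
Lemma q14 v v' : pk v == 1 -> pk v' == 4 -> col v != col v'.
Proof.
move=> H H'; have [NF _] := colU_spec H; have [F _] := colX_spec H'.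
by apply/eqP => E; move: NF; rewrite E /forbU F.
Qed.
Lemma q15 v v' : pk v == 1 -> pk v' == 5 -> col v != col v'.
Proof.
move=> H H'; have [NF _] := colU_spec H; have [F _] := colY_spec H'.
by apply/eqP => E; move: NF; rewrite E /forbU F.
Qed.
Lemma q34 v v' : pk v == 3 -> pk v' == 4 -> col v != col v'.
Proof.
move=> H H'; have [NF _] := colW_spec H; have [F _] := colX_spec H'.
by apply/eqP => E; move: NF; rewrite E /forbW F.
Qed.
Lemma q35 v v' : pk v == 3 -> pk v' == 5 -> col v != col v'.
Proof.
move=> H H'; have [NF _] := colW_spec H; have [F _] := colY_spec H'.
by apply/eqP => E; move: NF; rewrite E /forbW F.
Qed.
Lemma q25 v v' : pk v == 2 -> pk v' == 5 -> col v != col v'.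
Proof. move=> H H'; have [L _] := colB_spec H; have [_ [_ L']] := colY_spec H'; apply/eqP; ar2. Qed.
Lemma q26 v v' : pk v == 2 -> pk v' == 6 -> col v != col v'.
Proof. move=> H H'; have [L _] := colB_spec H; have [L' _] := colZ_spec H'; apply/eqP; ar2. Qed.
Lemma q45 v v' : pk v == 4 -> pk v' == 5 -> col v != col v'.
Proof. move=> H H'; have [_ [L1 L2]] := colX_spec H; have [_ [_ L']] := colY_spec H'; apply/eqP; ar2. Qed.

Lemma Fn_sym a b c d : Fn a b c d = Fn c d a b.
Proof. by rewrite /Fn orbC. Qed.

Lemma col_ok v v' : adj v v' -> col v != col v'.
Proof.
move=> Hadj.
have nv : v != v' by apply: contraTneq Hadj => ->; rewrite adj_irr.
move: Hadj; rewrite HadjE //.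
wlog L : v v' nv / pk v <= pk v'.
  move=> W Hadj; case: (leqP (pk v) (pk v')) => L; first exact: W.
  rewrite eq_sym; apply: W; [by rewrite eq_sym| exact: ltnW |].
  by rewrite Fn_sym (eq_sym (pk v')) (eq_sym (pi v')).
move=> Hadj.
case: (eqVneq (pk v) 0) => [/eqP Ha|Na0].
{ case: (eqVneq (pk v') 0) => [/eqP Hb|Nb0].
{ by apply: (contra_neq _ nv) => E; apply: colA_inj Ha Hb E. }
case: (eqVneq (pk v') 1) => [/eqP Hb|Nb1].
{ have Ep : pi v = pi v' by apply/eqP; move: Hadj; rewrite (eqP Ha) (eqP Hb) /Fn /= ?orbF. exact: q01 Ha Hb Ep. }
case: (eqVneq (pk v') 2) => [/eqP Hb|Nb2].
{ by move: Hadj; rewrite (eqP Ha) (eqP Hb) /Fn /=. }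
case: (eqVneq (pk v') 3) => [/eqP Hb|Nb3].
{ by move: Hadj; rewrite (eqP Ha) (eqP Hb) /Fn /=. }
case: (eqVneq (pk v') 4) => [/eqP Hb|Nb4].
{ exact: q04 Ha Hb. }
case: (eqVneq (pk v') 5) => [/eqP Hb|Nb5].
{ by move: Hadj; rewrite (eqP Ha) (eqP Hb) /Fn /=. }
have Hb := kind6 Nb0 Nb1 Nb2 Nb3 Nb4 Nb5.
exact: q06 Ha Hb. }
case: (eqVneq (pk v) 1) => [/eqP Ha|Na1].
{ case: (eqVneq (pk v') 0) => [/eqP Hb|Nb0].
{ by move: L; rewrite (eqP Ha) (eqP Hb). }
case: (eqVneq (pk v') 1) => [/eqP Hb|Nb1].
{ have Ep : pi v = pi v' by apply/eqP; move: Hadj; rewrite (eqP Ha) (eqP Hb) /Fn /= ?orbF. by apply: (contra_neq _ nv) => E; apply: colU_inj Ha Hb Ep E. }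
case: (eqVneq (pk v') 2) => [/eqP Hb|Nb2].
{ by move: Hadj; rewrite (eqP Ha) (eqP Hb) /Fn /=. }
case: (eqVneq (pk v') 3) => [/eqP Hb|Nb3].
{ by move: Hadj; rewrite (eqP Ha) (eqP Hb) /Fn /=. }
case: (eqVneq (pk v') 4) => [/eqP Hb|Nb4].
{ exact: q14 Ha Hb. }
case: (eqVneq (pk v') 5) => [/eqP Hb|Nb5].
{ exact: q15 Ha Hb. }
have Hb := kind6 Nb0 Nb1 Nb2 Nb3 Nb4 Nb5.
by move: Hadj; rewrite (eqP Ha) (eqP Hb) /Fn /=. }
case: (eqVneq (pk v) 2) => [/eqP Ha|Na2].
{ case: (eqVneq (pk v') 0) => [/eqP Hb|Nb0].
{ by move: L; rewrite (eqP Ha) (eqP Hb). }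
case: (eqVneq (pk v') 1) => [/eqP Hb|Nb1].
{ by move: L; rewrite (eqP Ha) (eqP Hb). }
case: (eqVneq (pk v') 2) => [/eqP Hb|Nb2].
{ by apply: (contra_neq _ nv) => E; apply: colB_inj Ha Hb E. }
case: (eqVneq (pk v') 3) => [/eqP Hb|Nb3].
{ have Ep : pi v = pi v' by apply/eqP; move: Hadj; rewrite (eqP Ha) (eqP Hb) /Fn /= ?orbF. exact: q23 Ha Hb Ep. }
case: (eqVneq (pk v') 4) => [/eqP Hb|Nb4].
{ by move: Hadj; rewrite (eqP Ha) (eqP Hb) /Fn /=. }
case: (eqVneq (pk v') 5) => [/eqP Hb|Nb5].
{ exact: q25 Ha Hb. }
have Hb := kind6 Nb0 Nb1 Nb2 Nb3 Nb4 Nb5.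
exact: q26 Ha Hb. }
case: (eqVneq (pk v) 3) => [/eqP Ha|Na3].
{ case: (eqVneq (pk v') 0) => [/eqP Hb|Nb0].
{ by move: L; rewrite (eqP Ha) (eqP Hb). }
case: (eqVneq (pk v') 1) => [/eqP Hb|Nb1].
{ by move: L; rewrite (eqP Ha) (eqP Hb). }
case: (eqVneq (pk v') 2) => [/eqP Hb|Nb2].
{ by move: L; rewrite (eqP Ha) (eqP Hb). }
case: (eqVneq (pk v') 3) => [/eqP Hb|Nb3].
{ have Ep : pi v = pi v' by apply/eqP; move: Hadj; rewrite (eqP Ha) (eqP Hb) /Fn /= ?orbF. by apply: (contra_neq _ nv) => E; apply: colW_inj Ha Hb Ep E. }
case: (eqVneq (pk v') 4) => [/eqP Hb|Nb4].
{ exact: q34 Ha Hb. }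
case: (eqVneq (pk v') 5) => [/eqP Hb|Nb5].
{ exact: q35 Ha Hb. }
have Hb := kind6 Nb0 Nb1 Nb2 Nb3 Nb4 Nb5.
by move: Hadj; rewrite (eqP Ha) (eqP Hb) /Fn /=. }
case: (eqVneq (pk v) 4) => [/eqP Ha|Na4].
{ case: (eqVneq (pk v') 0) => [/eqP Hb|Nb0].
{ by move: L; rewrite (eqP Ha) (eqP Hb). }
case: (eqVneq (pk v') 1) => [/eqP Hb|Nb1].
{ by move: L; rewrite (eqP Ha) (eqP Hb). }
case: (eqVneq (pk v') 2) => [/eqP Hb|Nb2].
{ by move: L; rewrite (eqP Ha) (eqP Hb). }
case: (eqVneq (pk v') 3) => [/eqP Hb|Nb3].
{ by move: L; rewrite (eqP Ha) (eqP Hb). }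
case: (eqVneq (pk v') 4) => [/eqP Hb|Nb4].
{ by apply: (contra_neq _ nv) => E; apply: colX_inj Ha Hb E. }
case: (eqVneq (pk v') 5) => [/eqP Hb|Nb5].
{ exact: q45 Ha Hb. }
have Hb := kind6 Nb0 Nb1 Nb2 Nb3 Nb4 Nb5.
by move: Hadj; rewrite (eqP Ha) (eqP Hb) /Fn /=. }
case: (eqVneq (pk v) 5) => [/eqP Ha|Na5].
{ case: (eqVneq (pk v') 0) => [/eqP Hb|Nb0].
{ by move: L; rewrite (eqP Ha) (eqP Hb). }
case: (eqVneq (pk v') 1) => [/eqP Hb|Nb1].
{ by move: L; rewrite (eqP Ha) (eqP Hb). }
case: (eqVneq (pk v') 2) => [/eqP Hb|Nb2].
{ by move: L; rewrite (eqP Ha) (eqP Hb). }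
case: (eqVneq (pk v') 3) => [/eqP Hb|Nb3].
{ by move: L; rewrite (eqP Ha) (eqP Hb). }
case: (eqVneq (pk v') 4) => [/eqP Hb|Nb4].
{ by move: L; rewrite (eqP Ha) (eqP Hb). }
case: (eqVneq (pk v') 5) => [/eqP Hb|Nb5].
{ by apply: (contra_neq _ nv) => E; apply: colY_inj Ha Hb E. }
have Hb := kind6 Nb0 Nb1 Nb2 Nb3 Nb4 Nb5.
by move: Hadj; rewrite (eqP Ha) (eqP Hb) /Fn /=. }
have Ha := kind6 Na0 Na1 Na2 Na3 Na4 Na5.
case: (eqVneq (pk v') 0) => [/eqP Hb|Nb0].
{ by move: L; rewrite (eqP Ha) (eqP Hb). }
case: (eqVneq (pk v') 1) => [/eqP Hb|Nb1].
{ by move: L; rewrite (eqP Ha) (eqP Hb). }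
case: (eqVneq (pk v') 2) => [/eqP Hb|Nb2].
{ by move: L; rewrite (eqP Ha) (eqP Hb). }
case: (eqVneq (pk v') 3) => [/eqP Hb|Nb3].
{ by move: L; rewrite (eqP Ha) (eqP Hb). }
case: (eqVneq (pk v') 4) => [/eqP Hb|Nb4].
{ by move: L; rewrite (eqP Ha) (eqP Hb). }
case: (eqVneq (pk v') 5) => [/eqP Hb|Nb5].
{ by move: L; rewrite (eqP Ha) (eqP Hb). }
have Hb := kind6 Nb0 Nb1 Nb2 Nb3 Nb4 Nb5.
by apply: (contra_neq _ nv) => E; apply: colZ_inj Ha Hb E.
Qed.
End Col.

Theorem theorem5p12 (k l : nat) (V : finType) (adj : rel V)
    (adj_sym : symmetric adj) (adj_irr : irreflexive adj)
    (Hblow : is_blowup adj (@Fadj k l)) :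
  chi adj <= (5 * omega adj + 3) %/ 4.
Proof.
case: Hblow => p Hp.
have HadjE := adjE Hp.
have Hk6 : forall v, pkF p v <= 6 by move=> v; exact: kd_le6.
have Hxyz : forall v, 4 <= pkF p v -> piF p v = 0 by move=> v; exact: idx_xyz.
have Hcol : colorable adj (c adj).
  apply/existsP; exists [ffun v => Ordinal (col_lt HadjE Hk6 Hxyz v)].
  apply/forallP => x; apply/forallP => y; apply/implyP => Hxy; rewrite !ffunE.
  rewrite -val_eqE /=; exact: (col_ok adj_irr HadjE Hk6 Hxyz Hxy).
change ((5 * omega adj + 3) %/ 4) with (c adj).
rewrite /chi; case: (leqP (c adj) #|V|) => HN.
  have HN' : c adj < #|V|.+1 by [].
  by apply: (bigmin_le_seq _ _ _ _ (Ordinal HN') _ (mem_index_enum _)).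
apply: leq_trans (ltnW HN).
elim/big_ind: _ => // [x y Hx Hy|i _]; first by rewrite geq_min Hx.
by rewrite -ltnS; apply: ltn_ord.
Qed.
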